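(* Let $\alpha\in(0,1/2)$ and suppose $V_0(x)+V_1(x)>0$ for all $x\in\mathcal X$. Then the allocation policy minimizing $\mathrm{tr}(\Sigma_{\mathrm{eff}}(\pi))$ over $\pi\in\Pi_\alpha=\{\pi:\alpha\le\pi(x)\le1-\alpha\ \text{for all }x\}$ is $$\pi^\star(x)=\mathrm{clip}_\alpha\!\left(\frac{\sqrt{V_1(x)}}{\sqrt{V_1(x)}+\sqrt{V_0(x)}}\right),\qquad V_a(x)=\sum_{t=0}^{t_{\max}}v_{t,a}(x)=\mathrm{tr}(\Sigma_a(x)),$$ where $v_{t,a}(x)$ is the $t$-th diagonal entry of $\Sigma_a(x)$.
   Context: Discrete horizon $\mathcal T=\{0,\dots,t_{\max}\}$; unit $(X,A,T,C)$ with covariates $X$, treatment $A\in\{0,1\}$, event time $T$, censoring time $C$; observed $\mathcal O=(X,A,\widetilde T,\Delta)$, $\widetilde T=\min\{T,C\}$, $\Delta=\mathbf 1(T\le C)$. $S_t(x,a)=\mathbb P(T>t\mid X=x,A=a)$, $\lambda^S_t(x,a)=\mathbb P(\widetilde T=t,\Delta=1\mid\widetilde T\ge t,X=x,A=a)$, $\lambda^G_t(x,a)=\mathbb P(\widetilde T=t,\Delta=0\mid\widetilde T\ge t,X=x,A=a)$, $G_{t-1}(x,a)=\prod_{i=0}^{t-1}(1-\lambda^G_i(x,a)/(1-\lambda^S_i(x,a)))$, $S_{-1}=G_{-1}\equiv 1$. $\eta_t$ denotes the collection of these hazards up to time $t$, and $\xi(\mathcal O,\eta_t)=\sum_{i=0}^t\frac{\mathbf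 1(\widetilde T=i,\Delta=1)-\mathbf 1(\widetilde T\ge i)\lambda^S_i(X,A)}{S_i(X,A)G_{i-1}(X,A)}$. $\tau_t=\mathbb E[S_t(X,1)-S_t(X,0)]$, $\boldsymbol\tau=(\tau_t)_{t=0}^{t_{\max}}$, $\boldsymbol S(X,a)=(S_t(X,a))_{t=0}^{t_{\max}}$, $\boldsymbol\xi=(\xi(\mathcal O,\eta_t))_{t=0}^{t_{\max}}$. For a policy $\pi(x)=\mathbb P(A=1\mid X=x)$, $\Sigma_a(X)=\mathrm{Var}(\boldsymbol S(X,a)\odot\boldsymbol\xi\mid X,A=a)$ ($\odot$ entrywise product) and $\Sigma_{\mathrm{eff}}(\pi)=\mathbb E[\Sigma_1(X)/\pi(X)+\Sigma_0(X)/(1-\pi(X))]+\mathbb E[b(X)b(X)^\top]$ with $b(X)=\boldsymbol S(X,1)-\boldsymbol S(X,0)-\boldsymbol\tau$. $\mathrm{clip}_\alpha(u)=\min\{1-\alpha,\max\{\alpha,u\}\}$. *)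

(* Defs.v *)
From HB Require Import structures.
From mathcomp Require Import all_boot all_order all_algebra.
From mathcomp Require Import all_classical all_reals all_analysis.

Set Implicit Arguments.
Unset Strict Implicit.
Unset Printing Implicit Defensive.

Import Order.TTheory GRing.Theory Num.Theory.
Import numFieldNormedType.Exports.

Local Open Scope classical_set_scope.
Local Open Scope ring_scope.

(* Discrete horizon T = {0,...,tmax}, indexed by 'I_(tmax.+1).
   Event time T and censoring time C are recorded coarsened at tmax+1
   (value tmax+1 = "beyond the horizon"); every quantity of the paper
   (hazards on {0..tmax}, S_t for t <= tmax, xi) only depends on this
   coarsening.  An outcome is a pair (T, C). *)
Definition outcome (tmax : nat) : finType := ('I_tmax.+2 * 'I_tmax.+2)%type.

Section Model.
Variables (R : realType) (tmax : nat).
(* q : conditional law of (T, C) given X = x, A = a *)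
Variable q : {ffun outcome tmax -> R}.

Definition Ttil (o : outcome tmax) : nat := minn o.1 o.2.
Definition Delta (o : outcome tmax) : bool := (o.1 <= o.2)%N.

Definition Eq (f : outcome tmax -> R) : R := \sum_o q o * f o.
Definition Pr (E : outcome tmax -> bool) : R := Eq (fun o => (E o)%:R).

(* lambda^S_t, lambda^G_t (convention x/0 = 0) *)
Definition lamS (t : nat) : R :=
  Pr (fun o => (Ttil o == t) && Delta o) / Pr (fun o => (t <= Ttil o)%N).
Definition lamG (t : nat) : R :=
  Pr (fun o => (Ttil o == t) && ~~ Delta o) / Pr (fun o => (t <= Ttil o)%N).

Definition Surv (t : nat) : R := Pr (fun o => (t < o.1)%N).

(* Gm1 t = G_{t-1} = prod_{i=0}^{t-1} (1 - lamG_i / (1 - lamS_i)); Gm1 0 = 1 *)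
Definition Gm1 (t : nat) : R :=
  \prod_(i < t) (1 - lamG i / (1 - lamS i)).

Definition xi (o : outcome tmax) (t : nat) : R :=
  \sum_(i < t.+1)
    (((Ttil o == i) && Delta o)%:R - (i <= Ttil o)%:R * lamS i)
      / (Surv i * Gm1 i).

Definition Yv (o : outcome tmax) (t : 'I_tmax.+1) : R := Surv t * xi o t.

Definition SigmaM : 'M[R]_tmax.+1 :=
  \matrix_(s, t) (Eq (fun o => Yv o s * Yv o t) - Eq (fun o => Yv o s) * Eq (fun o => Yv o t)).
End Model.

Section Policy.
Variables (R : realType) (d : measure_display) (X : measurableType d).
Variable (PX : probability X R) (tmax : nat).
Variable p : X -> bool -> {ffun outcome tmax -> R}.

Definition Sigma (x : X) (a : bool) : 'M[R]_tmax.+1 := SigmaM (p x a).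

Definition V (x : X) (a : bool) : R := \tr (Sigma x a).

Definition S (x : X) (a : bool) (t : 'I_tmax.+1) : R := Surv (p x a) t.

Definition tau (t : 'I_tmax.+1) : R :=
  Rintegral PX setT (fun x => S x true t - S x false t).

Definition b (x : X) (t : 'I_tmax.+1) : R := S x true t - S x false t - tau t.

Local Open Scope ereal_scope.
Definition Sigma_eff (pi : X -> R) (s t : 'I_tmax.+1) : \bar R :=
  (\int[PX]_x ((Sigma x true s t / pi x + Sigma x false s t / (1 - pi x))%R%:E))
  + (\int[PX]_x ((b x s * b x t)%R%:E)).

Definition tr_Sigma_eff (pi : X -> R) : \bar R := \sum_(t < tmax.+1) Sigma_eff pi t t.
End Policy.

Definition clip (R : realType) (alpha u : R) : R :=
  Num.min (1 - alpha) (Num.max alpha u).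

Definition Pi_alpha (R : realType) (d : measure_display) (X : measurableType d)
  (alpha : R) (pi : X -> R) : Prop :=
  measurable_fun setT pi /\ forall x, alpha <= pi x <= 1 - alpha.

Definition pistar (R : realType) (d : measure_display) (X : measurableType d)
  (tmax : nat) (p : X -> bool -> {ffun outcome tmax -> R}) (alpha : R) (x : X) : R :=
  clip alpha (Num.sqrt (V p x true) / (Num.sqrt (V p x true) + Num.sqrt (V p x false))).

(* Main.v *)
Require Import Defs.
From HB Require Import structures.
From mathcomp Require Import all_boot all_order all_algebra.
From mathcomp Require Import all_classical all_reals all_analysis.
From mathcomp Require Import ring lra.
Import Order.TTheory GRing.Theory Num.Theory.
Import numFieldNormedType.Exports.
Local Open Scope classical_set_scope.
Local Open Scope ring_scope.

Lemma inv_meas (R : realType) : measurable_fun [set: R] (@GRing.inv R).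
Proof.
have -> : [set: R] = [set 0] `|` ~` [set 0] by rewrite setUv.
have mC : measurable (~` [set (0:R)]) by apply: measurableC; exact: measurable_set1.
apply/(measurable_funU _ (measurable_set1 (0:R)) mC).
split; first exact: measurable_fun_set1.
apply: measurable_realfun.open_continuous_measurable_fun.
  by rewrite openC; apply: compact_closed; [exact: Rhausdorff|exact: compact_set1].
move=> x; rewrite inE /= => /eqP x0; exact: inv_continuous.
Qed.

Lemma sqrt_meas (R : realType) : measurable_fun [set: R] (@Num.sqrt R).
Proof. apply: measurable_realfun.continuous_measurable_fun; exact: sqrt_continuous. Qed.

Definition mf d (X : measurableType d) (R : realType) (f : X -> R) := measurable_fun [set: X] f.
Arguments mf {d X R} f.

Lemma mfM d (X : measurableType d) (R : realType) (f g : X -> R) : mf f -> mf g -> mf (fun x => f x * g x).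
Proof. by move=> hf hg; apply: measurable_realfun.measurable_funM. Qed.
Lemma mfD d (X : measurableType d) (R : realType) (f g : X -> R) : mf f -> mf g -> mf (fun x => f x + g x).
Proof. by move=> hf hg; apply: measurable_realfun.measurable_funD. Qed.
Lemma mfB d (X : measurableType d) (R : realType) (f g : X -> R) : mf f -> mf g -> mf (fun x => f x - g x).
Proof. by move=> hf hg; apply: measurable_realfun.measurable_funB. Qed.
Lemma mfC d (X : measurableType d) (R : realType) (c : R) : mf (fun _ : X => c).
Proof. exact: measurable_cst. Qed.
Lemma mfV d (X : measurableType d) (R : realType) (f : X -> R) : mf f -> mf (fun x => (f x)^-1).
Proof. by move=> hf; apply: (measurableT_comp (inv_meas R) hf). Qed.
Lemma mfdiv d (X : measurableType d) (R : realType) (f g : X -> R) : mf f -> mf g -> mf (fun x => f x / g x).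
Proof. by move=> hf hg; apply: mfM => //; apply: mfV. Qed.
Lemma mfsqrt d (X : measurableType d) (R : realType) (f : X -> R) : mf f -> mf (fun x => Num.sqrt (f x)).
Proof. by move=> hf; apply: (measurableT_comp (sqrt_meas R) hf). Qed.
Lemma mfmin d (X : measurableType d) (R : realType) (f g : X -> R) : mf f -> mf g -> mf (fun x => Num.min (f x) (g x)).
Proof. by move=> hf hg; apply: measurable_realfun.measurable_minr. Qed.
Lemma mfmax d (X : measurableType d) (R : realType) (f g : X -> R) : mf f -> mf g -> mf (fun x => Num.max (f x) (g x)).
Proof. by move=> hf hg; apply: measurable_realfun.measurable_maxr. Qed.
Lemma mfsum d (X : measurableType d) (R : realType) (I : Type) (s : seq I) (P : pred I) (h : I -> X -> R) :
  (forall i, mf (h i)) -> mf (fun x => \sum_(i <- s | P i) h i x).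
Proof.
move=> hh; rewrite /mf.
have -> : (fun x => \sum_(i <- s | P i) h i x) = (fun x => \sum_(i <- s) (if P i then h i x else 0)).
  by apply: funext => x; rewrite big_mkcond.
apply: measurable_sum => i; case: (P i) => //; exact: hh.
Qed.
Lemma mfprod d (X : measurableType d) (R : realType) (n : nat) (h : nat -> X -> R) :
  (forall i, mf (h i)) -> mf (fun x => \prod_(i < n) h i x).
Proof.
move=> hh; rewrite /mf.
have -> : (fun x => \prod_(i < n) h i x) = (fun x => \prod_(i <- index_enum 'I_n) h i x).
  by [].
by apply: measurable_prod => i _; exact: hh.
Qed.

Lemma mf_Eq d (X : measurableType d) (R : realType) (tmax : nat)
  (q : X -> {ffun outcome tmax -> R}) (hq : forall o, mf (fun x => q x o))
  (f : X -> outcome tmax -> R) (hf : forall o, mf (fun x => f x o)) :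
  mf (fun x => Eq (q x) (f x)).
Proof. rewrite /Eq; apply: mfsum => o; exact: mfM. Qed.

Lemma mf_Pr d (X : measurableType d) (R : realType) (tmax : nat)
  (q : X -> {ffun outcome tmax -> R}) (hq : forall o, mf (fun x => q x o)) E :
  mf (fun x => Pr (q x) E).
Proof. rewrite /Pr; apply: mf_Eq => // o; exact: mfC. Qed.

Lemma mf_lamS d (X : measurableType d) (R : realType) (tmax : nat)
  (q : X -> {ffun outcome tmax -> R}) (hq : forall o, mf (fun x => q x o)) t :
  mf (fun x => lamS (q x) t).
Proof. rewrite /lamS; apply: mfdiv; exact: mf_Pr. Qed.

Lemma mf_lamG d (X : measurableType d) (R : realType) (tmax : nat)
  (q : X -> {ffun outcome tmax -> R}) (hq : forall o, mf (fun x => q x o)) t :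
  mf (fun x => lamG (q x) t).
Proof. rewrite /lamG; apply: mfdiv; exact: mf_Pr. Qed.

Lemma mf_Surv d (X : measurableType d) (R : realType) (tmax : nat)
  (q : X -> {ffun outcome tmax -> R}) (hq : forall o, mf (fun x => q x o)) t :
  mf (fun x => Surv (q x) t).
Proof. exact: mf_Pr. Qed.

Lemma mf_Gm1 d (X : measurableType d) (R : realType) (tmax : nat)
  (q : X -> {ffun outcome tmax -> R}) (hq : forall o, mf (fun x => q x o)) t :
  mf (fun x => Gm1 (q x) t).
Proof.
rewrite /Gm1; apply: (@mfprod _ _ _ t (fun i x => 1 - lamG (q x) i / (1 - lamS (q x) i))) => i.
apply: mfB; first exact: mfC.
apply: mfdiv; first exact: mf_lamG.
apply: mfB; first exact: mfC.
exact: mf_lamS.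
Qed.

Lemma mf_xi d (X : measurableType d) (R : realType) (tmax : nat)
  (q : X -> {ffun outcome tmax -> R}) (hq : forall o, mf (fun x => q x o)) o t :
  mf (fun x => xi (q x) o t).
Proof.
rewrite /xi; apply: mfsum => i; apply: mfdiv.
  by apply: mfB; [exact: mfC| apply: mfM; [exact: mfC|exact: mf_lamS]].
by apply: mfM; [exact: mf_Surv|exact: mf_Gm1].
Qed.

Lemma mf_Yv d (X : measurableType d) (R : realType) (tmax : nat)
  (q : X -> {ffun outcome tmax -> R}) (hq : forall o, mf (fun x => q x o)) o t :
  mf (fun x => Yv (q x) o t).
Proof. rewrite /Yv; apply: mfM; [exact: mf_Surv|exact: mf_xi]. Qed.

Lemma mf_Sigma d (X : measurableType d) (R : realType) (tmax : nat)
  (q : X -> {ffun outcome tmax -> R}) (hq : forall o, mf (fun x => q x o)) s t :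
  mf (fun x => SigmaM (q x) s t).
Proof.
rewrite /SigmaM.
have -> : (fun x => (\matrix_(s0, t0) (Eq (q x) (fun o => Yv (q x) o s0 * Yv (q x) o t0) -
   Eq (q x) (fun o => Yv (q x) o s0) * Eq (q x) (fun o => Yv (q x) o t0))) s t) =
  (fun x => Eq (q x) (fun o => Yv (q x) o s * Yv (q x) o t) -
   Eq (q x) (fun o => Yv (q x) o s) * Eq (q x) (fun o => Yv (q x) o t)).
  by apply: funext => x; rewrite mxE.
apply: mfB; first by apply: mf_Eq => // o; apply: mfM; exact: mf_Yv.
by apply: mfM; apply: mf_Eq => // o; exact: mf_Yv.
Qed.

Lemma mf_V d (X : measurableType d) (R : realType) (tmax : nat)
  (p : X -> bool -> {ffun outcome tmax -> R})
  (p_meas : forall a o, measurable_fun setT (fun x => p x a o)) a :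
  mf (fun x => V p x a).
Proof.
rewrite /V /Sigma /mxtrace; apply: mfsum => i.
apply: (@mf_Sigma _ _ _ _ (fun x => p x a)) => o; exact: p_meas.
Qed.

Lemma fcmp (R : realType) (a c q p : R) : 0 < q < 1 -> 0 < p < 1 ->
  0 <= (p - q) * (c^+2 * p * q - a^+2 * (1 - p) * (1 - q)) ->
  a^+2 / q + c^+2 / (1 - q) <= a^+2 / p + c^+2 / (1 - p).
Proof.
move=> /andP[q0 q1] /andP[p0 p1] K.
rewrite -subr_ge0.
have -> : a ^+ 2 / p + c ^+ 2 / (1 - p) - (a ^+ 2 / q + c ^+ 2 / (1 - q)) =
  ((p - q) * (c^+2 * p * q - a^+2 * (1 - p) * (1 - q))) / (p * q * (1 - p) * (1 - q)).
  field.
  apply/and4P; split; rewrite ?subr_eq0; apply/eqP; lra.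
apply: divr_ge0 => //.
apply: mulr_ge0; [apply: mulr_ge0; [apply: mulr_ge0|]|]; lra.
Qed.

Lemma keyineq (R : realType) (alpha a c p : R) : 0 < alpha < 1/2 -> 0 <= a -> 0 <= c -> 0 < a + c ->
  alpha <= p <= 1 - alpha ->
  a^+2 / Num.min (1 - alpha) (Num.max alpha (a / (a + c))) + c^+2 / (1 - Num.min (1 - alpha) (Num.max alpha (a / (a + c)))) <= a^+2 / p + c^+2 / (1 - p).
Proof.
move=> /andP[al0 al1] a0 c0 s0 /andP[pl pu].
set ps := Num.min (1 - alpha) (Num.max alpha (a / (a + c))).
have p0 : 0 < p < 1 by apply/andP; split; lra.
set u := a / (a + c).
have hu1 : (u <= alpha) = (a <= alpha * (a + c)) by rewrite /u ler_pdivrMr.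
have hu2 : (1 - alpha <= u) = ((1 - alpha) * (a + c) <= a) by rewrite /u ler_pdivlMr.
have [Hl|Hl] := leP u alpha.
  have -> : ps = alpha.
    by rewrite /ps (max_idPl Hl) (min_idPr _) //; lra.
  apply: fcmp => //; first (apply/andP; split; lra).
  move: Hl; rewrite hu1 => Hl.
  have h1 : a * (1 - alpha) <= alpha * c by lra.
  have h2 : a * (1 - p) <= p * c.
    have : a * (1 - p) <= a * (1 - alpha) by apply: ler_wpM2l => //; lra.
    have : alpha * c <= p * c by apply: ler_wpM2r => //.
    lra.
  have h3 : (a * (1 - alpha)) * (a * (1 - p)) <= (alpha * c) * (p * c).
    apply: ler_pM => //; apply: mulr_ge0 => //; lra.
  apply: mulr_ge0; first lra.
  have -> : c ^+ 2 * p * alpha - a ^+ 2 * (1 - p) * (1 - alpha) =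
     (alpha * c) * (p * c) - (a * (1 - alpha)) * (a * (1 - p)) by ring.
  lra.
have [Hu|Hu] := leP (1 - alpha) u.
  have -> : ps = 1 - alpha.
    rewrite /ps (max_idPr _); last exact: ltW Hl.
    by rewrite (min_idPl Hu).
  apply: fcmp => //; first (apply/andP; split; lra).
  move: Hu; rewrite hu2 => Hu.
  have h1 : c * (1 - alpha) <= alpha * a by lra.
  have h2 : c * p <= a * (1 - p).
    have : c * p <= c * (1 - alpha) by apply: ler_wpM2l => //; lra.
    have : alpha * a <= (1 - p) * a by apply: ler_wpM2r => //; lra.
    lra.
  have h3 : (c * (1 - alpha)) * (c * p) <= (alpha * a) * (a * (1 - p)).
    apply: ler_pM => //; apply: mulr_ge0 => //; lra.
  have -> : (p - (1 - alpha)) * (c ^+ 2 * p * (1 - alpha) - a ^+ 2 * (1 - p) * (1 - (1 - alpha)))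
    = ((1 - alpha) - p) * ((alpha * a) * (a * (1 - p)) - (c * (1 - alpha)) * (c * p)) by ring.
  apply: mulr_ge0; lra.
have -> : ps = u.
  rewrite /ps (max_idPr _); last exact: ltW Hl.
  by rewrite (min_idPr _) //; rewrite -/u; lra.
have sne : a + c != 0 by rewrite gt_eqF.
have u1 : 1 - u = c / (a + c) by rewrite /u; field.
apply: fcmp => //; first (apply/andP; split; lra).
have -> : c ^+ 2 * p * u - a ^+ 2 * (1 - p) * (1 - u) = a * c * (p - u).
  rewrite u1 /u; field => //.
have -> : (p - u) * (a * c * (p - u)) = (a * c) * (p - u) ^+ 2 by ring.
apply: mulr_ge0; [exact: mulr_ge0| exact: sqr_ge0].
Qed.

Lemma var_ge0 (R : realType) tmax (q : {ffun outcome tmax -> R})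
  (q0 : forall o, 0 <= q o) (q1 : \sum_o q o = 1) (Y : outcome tmax -> R) :
  0 <= Eq q (fun o => Y o * Y o) - Eq q Y * Eq q Y.
Proof.
set m := Eq q Y.
have H : 0 <= \sum_o q o * (Y o - m) ^+ 2.
  by apply: sumr_ge0 => o _; apply: mulr_ge0 => //; exact: sqr_ge0.
suff <- : \sum_o q o * (Y o - m) ^+ 2 = Eq q (fun o => Y o * Y o) - m * m by [].
have -> : \sum_o q o * (Y o - m) ^+ 2 =
   \sum_o (q o * (Y o * Y o) - ((2 * m) * (q o * Y o) - (m * m) * q o)).
  by apply: eq_bigr => o _; ring.
rewrite sumrB sumrB -!mulr_sumr q1 /Eq -/(Eq q Y) -/m; ring.
Qed.

Lemma V_ge0 (R : realType) d (X : measurableType d) tmax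
  (p : X -> bool -> {ffun outcome tmax -> R})
  (p_ge0 : forall x a o, 0 <= p x a o)
  (p_sum1 : forall x a, \sum_o p x a o = 1) x a : 0 <= V p x a.
Proof.
rewrite /V /Sigma /mxtrace; apply: sumr_ge0 => i _; rewrite /SigmaM mxE.
exact: var_ge0.
Qed.


Lemma clip_bounds (R : realType) (alpha u : R) : 0 < alpha < 1 / 2 ->
  alpha <= clip alpha u <= 1 - alpha.
Proof.
move=> /andP[a0 a1]; rewrite /clip; apply/andP; split.
  rewrite le_min le_max lexx orTb andbT; lra.
by rewrite ge_min lexx.
Qed.

Theorem proposition1 (R : realType) (d : measure_display) (X : measurableType d)
  (PX : probability X R) (tmax : nat)
  (p : X -> bool -> {ffun outcome tmax -> R})
  (p_ge0 : forall x a o, 0 <= p x a o)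
  (p_sum1 : forall x a, \sum_o p x a o = 1)
  (p_meas : forall a o, measurable_fun setT (fun x => p x a o))
  (alpha : R) (halpha : 0 < alpha < 1 / 2)
  (hV : forall x, 0 < V p x false + V p x true) :
  Pi_alpha alpha (pistar p alpha) /\
  forall pi : X -> R, Pi_alpha alpha pi ->
    (tr_Sigma_eff PX p (pistar p alpha) <= tr_Sigma_eff PX p pi)%E.
Proof.
have Vge0 := @V_ge0 R d X tmax p p_ge0 p_sum1.
have mV := @mf_V d X R tmax p p_meas.
have Hps : Pi_alpha alpha (pistar p alpha).
  split; last by move=> x; exact: clip_bounds.
  rewrite /pistar /clip.
  apply: mfmin; first exact: mfC.
  apply: mfmax; first exact: mfC.
  apply: mfdiv; first exact: mfsqrt.
  by apply: mfD; exact: mfsqrt.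
split => // pi Hpi.
have trE : forall f : X -> R, Pi_alpha alpha f ->
  tr_Sigma_eff PX p f = ((\int[PX]_x (V p x true / f x + V p x false / (1 - f x))%:E)
     + \sum_(t < tmax.+1) \int[PX]_x ((b PX p x t * b PX p x t)%:E))%E.
  move=> f [mf_ fb].
  rewrite /tr_Sigma_eff /Sigma_eff big_split /=; congr (_ + _)%E.
  rewrite -ge0_integral_sum //.
  - apply: eq_integral => x _; rewrite sumEFin; congr EFin.
    rewrite /V /mxtrace big_split /= -!mulr_suml //.
  - move=> t; apply/measurable_realfun.measurable_EFinP.
    apply: mfD; apply: mfdiv.
    + rewrite /Sigma; apply: (@mf_Sigma _ _ _ _ (fun x => p x true)) => o; exact: p_meas.
    + exact: mf_.
    + rewrite /Sigma; apply: (@mf_Sigma _ _ _ _ (fun x => p x false)) => o; exact: p_meas.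
    + by apply: mfB; [exact: mfC|exact: mf_].
  - move=> t x _; rewrite lee_fin.
    have := fb x; move: halpha => /andP[? ?] /andP[? ?].
    apply: addr_ge0; apply: divr_ge0;
      try (rewrite /Sigma /SigmaM mxE; exact: var_ge0); lra.
rewrite !trE //; apply: leeD => //.
have [Hpsm Hpsb] := Hps; have [Hpim Hpib] := Hpi.
apply: ge0_le_integral => //.
- move=> x _; rewrite lee_fin.
  have := Hpsb x; move: halpha => /andP[? ?] /andP[? ?].
  apply: addr_ge0; apply: divr_ge0 => //; lra.
- apply/measurable_realfun.measurable_EFinP.
  by apply: mfD; apply: mfdiv => //; apply: mfB => //; exact: mfC.
- apply/measurable_realfun.measurable_EFinP.
  by apply: mfD; apply: mfdiv => //; apply: mfB => //; exact: mfC.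
- move=> x _; rewrite lee_fin.
  rewrite /pistar /clip.
  have a0 := sqrtr_ge0 (V p x true).
  have c0 := sqrtr_ge0 (V p x false).
  have s0 : 0 < Num.sqrt (V p x true) + Num.sqrt (V p x false).
    rewrite lt0r addr_ge0 // andbT paddr_eq0 // !sqrtr_eq0 negb_and -!ltNge.
    have := hV x; have := Vge0 x true; have := Vge0 x false.
    by case: (ltgtP (V p x true) 0); case: (ltgtP (V p x false) 0) => //; lra.
  have := @keyineq _ _ _ _ _ halpha a0 c0 s0 (Hpib x).
  by rewrite !sqr_sqrtr.
Qed.
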